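(* Fix an RWA-P instance (setting as in the context) and let $M=\max_{r\in R}\big(\max_{w\in W^r}B^r_w+\max_{p\in P^r}B^r_p\big)$. If $\alpha,\beta>0$ satisfy $$\frac{\beta}{\alpha}>|R|\,(M-2)+2,$$ then for every pair of feasible solutions $(\hat x,\hat y)$, $(\tilde x,\tilde y)$ with $f_\beta(\hat x)>f_\beta(\tilde x)$ we have $f(\hat x,\hat y)<f(\tilde x,\tilde y)$.
   Context: An RWA-P instance consists of: a directed graph $G=(V,E)$ (parallel arcs allowed), whose arcs are called links; a finite set $\Lambda$ of wavelengths; a finite set $R$ of requests, each request $r$ having a source node $s^r$ and a distinct destination node $t^r$; and for each $r\in R$ nonempty finite sets $W^r$ (working lightpaths) and $P^r$ (protection lightpaths). Each lightpath $\ell$ of request $r$ is a directed path in $G$ from $s^r$ to $t^r$ together with a wavelength $\Lambda[\ell]\in\Lambda$; $E[\ell]$ denotes its set of links and its length is $B^r_\ell=|E[\ell]|\ge1$. Conflict sets: $\mathcal C_1=\{(r,w,p): w\in W^r,p\in P^r, E[w]\cap E[p]\ne\emptyset\}$; $\mathcal C_2=\{(r_1,r_2,w,p): r_1\ne r_2, w\in W^{r_1}, p\in P^{r_2}, \Lambda[w]=\Lambda[p], E[w]\cap E[p]\neq\emptyset\}$; $\mathcal C_3=\{(r_1,r_2,w_1,w_2): w_1\in W^{r_1}, w_2\in W^{r_2}, (r_1,w_1)\ne(r_2,w_2), \Lambda[w_1]=\Lambda[w_2], E[w_1]\cap E[w_2]\ne\emptyset\}$; $\mathcal C_4$ analogously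 for pairs of distinct protection lightpaths. A solution is a pair of binary vectors $x=(x^r_w)$, $y=(y^r_p)$; it is feasible if $\sum_{w\in W^r}x^r_w=\sum_{p\in P^r}y^r_p$ and $\sum_{w\in W^r}x^r_w\le1$ for all $r$, and $x^r_w+y^r_p\le1$ for $(r,w,p)\in\mathcal C_1$, $x^{r_1}_w+y^{r_2}_p\le1$ on $\mathcal C_2$, $x^{r_1}_{w_1}+x^{r_2}_{w_2}\le1$ on $\mathcal C_3$, $y^{r_1}_{p_1}+y^{r_2}_{p_2}\le1$ on $\mathcal C_4$. Define $f_\alpha(x,y)=\sum_{r}\big(\sum_{w}B^r_wx^r_w+\sum_{p}B^r_py^r_p\big)$ (link usage), $f_\beta(x)=\sum_r\sum_w x^r_w$ (granted requests), and $f(x,y)=\alpha f_\alpha(x,y)-\beta f_\beta(x)$. *)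

(* Defs.v *)
From HB Require Import structures.
From mathcomp Require Import all_boot all_order all_algebra.
Set Implicit Arguments. Unset Strict Implicit. Unset Printing Implicit Defensive.
Import Order.TTheory GRing.Theory Num.Theory.

Section RWAP.
(* Network: nodes V, links (arcs, parallel arcs allowed) Lk with tail/head. *)
Variables (V Lk : finType) (tl hd : Lk -> V).

Definition is_dipath (s t : V) (a : seq Lk) : bool :=
  match a with
  | [::] => false
  | e0 :: rest =>
      [&& tl e0 == s, hd (last e0 rest) == t,
          path (fun e f => hd e == tl f) e0 rest
        & uniq (tl e0 :: map hd a)]
  end.

(* Wavelengths Lam, requests Req, lightpath identifiers Idx.
   W r / P r : working / protection lightpaths of request r;
   arcs r l / wl r l : link sequence and wavelength of lightpath l of r. *)
Variables (Lam Req Idx : finType) (src dst : Req -> V)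
  (W P : Req -> {set Idx}) (arcs : Req -> Idx -> seq Lk) (wl : Req -> Idx -> Lam).

Definition valid_instance : Prop :=
  [/\ forall r, src r != dst r,
      forall r, W r != set0,
      forall r, P r != set0
    & forall r l, l \in W r :|: P r -> is_dipath (src r) (dst r) (arcs r l)].

Definition Elp (r : Req) (l : Idx) : {set Lk} := [set e in arcs r l].
Definition B (r : Req) (l : Idx) : nat := #|Elp r l|.

Definition inter (r1 : Req) (l1 : Idx) (r2 : Req) (l2 : Idx) : bool :=
  Elp r1 l1 :&: Elp r2 l2 != set0.

(* Solutions: binary vectors x^r_w (w in W r), y^r_p (p in P r). *)
Definition conflicts_ok (x y : Req -> Idx -> bool) : Prop :=
  [/\ 
      (forall r w p, w \in W r -> p \in P r -> inter r w r p ->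
         x r w + y r p <= 1),
      (forall r1 r2 w p, r1 != r2 -> w \in W r1 -> p \in P r2 ->
         wl r1 w = wl r2 p -> inter r1 w r2 p -> x r1 w + y r2 p <= 1),
      (forall r1 r2 w1 w2, w1 \in W r1 -> w2 \in W r2 -> (r1, w1) != (r2, w2) ->
         wl r1 w1 = wl r2 w2 -> inter r1 w1 r2 w2 -> x r1 w1 + x r2 w2 <= 1)
    &
      (forall r1 r2 p1 p2, p1 \in P r1 -> p2 \in P r2 -> (r1, p1) != (r2, p2) ->
         wl r1 p1 = wl r2 p2 -> inter r1 p1 r2 p2 -> y r1 p1 + y r2 p2 <= 1)].

Definition feasible (x y : Req -> Idx -> bool) : Prop :=
  [/\ forall r, \sum_(w in W r) (x r w : nat) = \sum_(p in P r) (y r p : nat),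
      forall r, \sum_(w in W r) (x r w : nat) <= 1
    & conflicts_ok x y].

Definition f_alpha (x y : Req -> Idx -> bool) : nat :=
  \sum_r (\sum_(w in W r) B r w * x r w + \sum_(p in P r) B r p * y r p).

Definition f_beta (x : Req -> Idx -> bool) : nat :=
  \sum_r \sum_(w in W r) (x r w : nat).

Local Open Scope ring_scope.
Definition f_obj (K : numDomainType) (alpha beta : K) (x y : Req -> Idx -> bool) : K :=
  alpha * (f_alpha x y)%:R - beta * (f_beta x)%:R.

Definition Mmax : nat :=
  (\max_r (\max_(w in W r) B r w + \max_(p in P r) B r p))%N.

End RWAP.

(* Main.v *)
Require Import Defs.
From HB Require Import structures.
From mathcomp Require Import all_boot all_order all_algebra.
From mathcomp Require Import lra zify.
Import Order.TTheory GRing.Theory Num.Theory.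

Section H.
Variables (Lam Req Idx Lk : finType)
  (W P : Req -> {set Idx}) (arcs : Req -> Idx -> seq Lk) (wl : Req -> Idx -> Lam).

Lemma fb_le_card x y : feasible W P arcs wl x y -> f_beta W x <= #|Req|.
Proof.
case=> _ h1 _; rewrite /f_beta.
apply: leq_trans (_ : \sum_(r : Req) 1 <= _).
  by apply: leq_sum => r _; exact: h1.
by rewrite sum_nat_const muln1.
Qed.

Lemma fa_le x y : feasible W P arcs wl x y ->
  f_alpha W P arcs x y <= Mmax W P arcs * f_beta W x.
Proof.
case=> h0 _ _; rewrite /f_alpha /f_beta big_distrr /=.
apply: leq_sum => r _.
set mW := \max_(w in W r) B arcs r w.
set mP := \max_(p in P r) B arcs r p.
have hm : mW + mP <= Mmax W P arcs.
  by rewrite /Mmax /mW /mP (bigD1 r) //= leq_maxl.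
apply: (@leq_trans ((mW + mP) * \sum_(w in W r) (x r w : nat)));
  last by apply: leq_mul.
rewrite mulnDl; apply: leq_add.
  rewrite big_distrr /=; apply: leq_sum => w hw.
  by apply: leq_mul => //; rewrite /mW (bigD1 w) //= leq_maxl.
rewrite h0 big_distrr /=; apply: leq_sum => p hp.
by apply: leq_mul => //; rewrite /mP (bigD1 p) //= leq_maxl.
Qed.

Lemma fa_ge x y : (forall r l, l \in W r :|: P r -> 0 < B arcs r l) ->
  feasible W P arcs wl x y ->
  2 * f_beta W x <= f_alpha W P arcs x y.
Proof.
move=> hB [h0 _ _]; rewrite /f_alpha /f_beta big_distrr /=.
apply: leq_sum => r _.
rewrite mul2n -addnn; apply: leq_add.
  apply: leq_sum => w hw; rewrite -[X in X <= _]mul1n leq_mul2r hB ?orbT //.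
  by rewrite in_setU hw.
rewrite h0; apply: leq_sum => w hw; rewrite -[X in X <= _]mul1n leq_mul2r hB ?orbT //.
by rewrite in_setU hw orbT.
Qed.
End H.

Local Open Scope ring_scope.

Theorem proposition2
  (V Lk : finType) (tl hd : Lk -> V)
  (Lam Req Idx : finType) (src dst : Req -> V)
  (W P : Req -> {set Idx}) (arcs : Req -> Idx -> seq Lk) (wl : Req -> Idx -> Lam)
  (K : realFieldType) (alpha beta : K) :
  valid_instance tl hd src dst W P arcs ->
  0 < alpha -> 0 < beta ->
  beta / alpha > #|Req|%:R * ((Mmax W P arcs)%:R - 2) + 2 ->
  forall xh yh xt yt : Req -> Idx -> bool,
    feasible W P arcs wl xh yh -> feasible W P arcs wl xt yt ->
    (f_beta W xh > f_beta W xt)%N ->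
    f_obj W P arcs alpha beta xh yh < f_obj W P arcs alpha beta xt yt.
Proof.
move=> [_ _ _ hpath] ha hb hc xh yh xt yt fh ft hab.
have hB : forall r l, l \in W r :|: P r -> (0 < B arcs r l)%N.
  move=> r l /hpath; rewrite /B /Elp.
  case: (arcs r l) => [|e s] //= _.
  by apply/card_gt0P; exists e; rewrite inE mem_head.
have h1 := @fa_le _ _ _ _ _ _ _ _ _ _ fh. have h2 := @fa_ge _ _ _ _ _ _ _ _ _ _ hB ft.
have h3 := @fa_ge _ _ _ _ _ _ _ _ _ _ hB fh. have h4 := @fb_le_card _ _ _ _ _ _ _ _ _ _ fh.
rewrite /f_obj.
move: hc h1 h2 h3 h4 hab.
set A := f_alpha W P arcs xh yh. set A' := f_alpha W P arcs xt yt.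
set a := f_beta W xh. set b := f_beta W xt. set M := Mmax W P arcs.
set n := #|Req|.
move=> hc h1 h2 h3 h4 hab.
have hM : (2 <= M)%N.
  have : (2 * a <= M * a)%N by apply: leq_trans h3 h1.
  rewrite leq_mul2r; case/orP => //; move/eqP=> a0; rewrite a0 in hab; by [].
have key : (M * a + (n * (M - 2) + 2) * b <= (n * (M - 2) + 2) * a + 2 * b)%N.
  have [m ->] : exists m, M = (m + 2)%N by exists (M - 2)%N; lia.
  rewrite addnK.
  have e1 : (m * a <= m * n)%N by rewrite leq_mul2l h4 orbT.
  have e2 : (n * m * b.+1 <= n * m * a)%N by rewrite leq_mul2l hab orbT.
  rewrite mulnS in e2.
  rewrite !mulnDl; lia.
set c := beta / alpha.
have hbeta : beta = c * alpha by rewrite /c divfK // gt_eqF.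
have hA : (A%:R - A'%:R : K) <= M%:R * a%:R - 2 * b%:R.
  have e1 : A%:R <= (M * a)%:R :> K by rewrite ler_nat.
  have e2 : (2 * b)%:R <= A'%:R :> K by rewrite ler_nat.
  rewrite natrM in e1; rewrite natrM in e2.
  lra.
have hkey : (M%:R * a%:R : K) - 2 * b%:R <= (n%:R * (M%:R - 2) + 2) * (a%:R - b%:R).
  have e : (M * a + (n * (M - 2) + 2) * b)%N%:R <= ((n * (M - 2) + 2) * a + 2 * b)%N%:R :> K by rewrite ler_nat.
  have eD : (n * (M - 2) + 2)%N%:R = n%:R * (M%:R - 2) + 2 :> K.
    by rewrite natrD natrM natrB.
  rewrite !natrD !natrM eD in e; lra.
have hab' : (0 : K) < a%:R - b%:R by rewrite subr_gt0 ltr_nat.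
have hlt : (n%:R * (M%:R - 2) + 2) * (a%:R - b%:R) < c * (a%:R - b%:R).
  by rewrite ltr_pM2r.
have hfin : (A%:R - A'%:R : K) - c * (a%:R - b%:R) < 0 by lra.
rewrite hbeta.
have : alpha * ((A%:R - A'%:R : K) - c * (a%:R - b%:R)) < 0 by rewrite pmulr_rlt0.
move=> e; nra.
Qed.
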